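(* Let $\Lambda$ be a left cancellative small category and $v\in\Lambda^0$. For $C\in v\Lambda^*$ let $\mathcal U^0_C=\{E\setminus\bigcup\mathcal F: E\in C,\ \mathcal F\subseteq\mathcal D^{(0)}_v\text{ finite and }\mathcal F\text{ does not cover }C\}$. Then $\mathcal U^0_C$ is an ultrafilter base in the ring $\mathcal A_v$; let $\mathcal U_C$ be the ultrafilter it generates. The map $C\mapsto\mathcal U_C$ is a bijection from $v\Lambda^*$ onto the set of ultrafilters in $\mathcal A_v$, with inverse $\mathcal U\mapsto\mathcal U\cap\mathcal D^{(0)}_v$.
   Context: A left cancellative small category (LCSC) is a small category $\Lambda$ such that $\alpha\beta=\alpha\gamma$ implies $\beta=\gamma$. Morphisms are composed as $\alpha\beta$ when $s(\alpha)=r(\beta)$; $\Lambda^0$ is the set of objects, identified with identity morphisms; $v\Lambda=\{\alpha:r(\alpha)=v\}$; $\alpha\Lambda=\{\alpha\beta:r(\beta)=s(\alpha)\}$. For $\alpha\in\Lambda$, $\tau^\alpha(\beta)=\alpha\beta$ on $s(\alpha)\Lambda$ and $\sigma^\alpha:\alpha\Lambda\to s(\alpha)\Lambda$ is its inverse. A zigzag is a tuple $\zeta=(\alpha_1,\beta_1,\dots,\alpha_n,\beta_n)$ with $r(\alpha_i)=r(\beta_i)$ and $s(\alpha_{i+1})=s(\beta_i)$; $s(\zeta)=s(\beta_n)$, $\mathcal Zv=\{\zeta:s(\zeta)=v\}$. The zigzag map $\varphi_\zeta=\sigma^{\alpha_1}\circ\tau^{\beta_1}\circ\cdots\circ\sigma^{\alpha_n}\circ\tau^{\beta_n}$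 (composition of partial maps) has domain $A(\zeta)\subseteq s(\zeta)\Lambda$. $\mathcal D^{(0)}_v$ is the set of nonempty $A(\zeta)$, $\zeta\in\mathcal Zv$ (closed under nonempty intersections), and $\mathcal A_v$ is the ring of subsets of $v\Lambda$ generated by $\mathcal D^{(0)}_v$. In a ring of sets $\mathcal A$, a filter is a nonempty collection of nonempty members closed under intersections and supersets (in $\mathcal A$), an ultrafilter is a maximal filter, and an ultrafilter base is a nonempty family of nonempty members such that the intersection of any two contains a third and the filter it generates (by closing under supersets) is an ultrafilter. A filter in $\mathcal D^{(0)}_v$ is a nonempty $C\subseteq\mathcal D^{(0)}_v$ closed under intersection and under supersets within $\mathcal D^{(0)}_v$. A finite $\mathcal F\subseteq\mathcal D^{(0)}_v$ covers the filter $C$ if some $E\in C$ satisfies $E\subseteq\bigcup\mathcal F$. $v\Lambda^*$ is the set of filters $C$ in $\mathcal D^{(0)}_v$ such that every finite $\mathcal F\subseteq\mathcal D^{(0)}_v$ with $\mathcal F\cap C=\varnothing$ does not cover $C$. *)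

(* Defs.v *)
From Stdlib Require Import List.
Import ListNotations.
Set Implicit Arguments.

(* Objects form a type [Obj]; morphisms form a type [Mor]; composition
   [comp a b] = "a b" is a total function that is only meaningful when
   [src a = rng b].  Objects are identified with identity morphisms via [ident]. *)
Record LCSC := {
  Obj : Type;
  Mor : Type;
  src : Mor -> Obj;
  rng : Mor -> Obj;
  ident : Obj -> Mor;
  comp : Mor -> Mor -> Mor;
  src_ident : forall v, src (ident v) = v;
  rng_ident : forall v, rng (ident v) = v;
  rng_comp : forall a b, src a = rng b -> rng (comp a b) = rng a;
  src_comp : forall a b, src a = rng b -> src (comp a b) = src b;
  comp_ident_l : forall a, comp (ident (rng a)) a = a;
  comp_ident_r : forall a, comp a (ident (src a)) = a;
  comp_assoc : forall a b c, src a = rng b -> src b = rng c ->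
      comp a (comp b c) = comp (comp a b) c;
  left_cancel : forall a b c, src a = rng b -> src a = rng c ->
      comp a b = comp a c -> b = c
}.

Section Defs.
Variable L : LCSC.
Local Notation M := (Mor L).

Definition mset := M -> Prop.
Definition family := mset -> Prop.

Definition subset (E F : mset) : Prop := forall x, E x -> F x.
Definition inter (E F : mset) : mset := fun x => E x /\ F x.
Definition union (E F : mset) : mset := fun x => E x \/ F x.
Definition diff (E F : mset) : mset := fun x => E x /\ ~ F x.
Definition emptyset : mset := fun _ => False.
Definition nonempty (E : mset) : Prop := exists x, E x.
Definition bigunion (l : list mset) : mset := fun x => exists F, In F l /\ F x.

(* A zigzag (a1,b1,...,an,bn) is a nonempty list of pairs [(a_i, b_i)]. *)
Definition zigzag := list (M * M).

Fixpoint zz_ok (z : zigzag) : Prop :=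
  match z with
  | [] => False
  | [(a, b)] => rng L a = rng L b
  | (a, b) :: (((a', _) :: _) as rest) =>
      rng L a = rng L b /\ src L a' = src L b /\ zz_ok rest
  end.

Definition zz_src (z : zigzag) (v : Obj L) : Prop :=
  exists a b, last z (a, b) = (a, b) /\ z <> [] /\ src L b = v.

(* Graph of tau^b : x |-> b x, defined on src(b) Lambda *)
Definition tau_rel (b x y : M) : Prop := rng L x = src L b /\ y = comp L b x.
(* Graph of sigma^a : a y |-> y, defined on a Lambda *)
Definition sigma_rel (a x y : M) : Prop := rng L y = src L a /\ x = comp L a y.

(* Graph of the zigzag map phi_z = sigma^{a1} o tau^{b1} o ... o sigma^{an} o tau^{bn}
   (composition of partial maps, rightmost applied first). *)
Fixpoint zz_rel (z : zigzag) : M -> M -> Prop :=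
  match z with
  | [] => fun x y => x = y
  | (a, b) :: rest => fun x y =>
      exists z1 z2, zz_rel rest x z1 /\ tau_rel b z1 z2 /\ sigma_rel a z2 y
  end.

Definition zz_dom (z : zigzag) : mset := fun x => exists y, zz_rel z x y.

Definition vLam (v : Obj L) : mset := fun x => rng L x = v.

Definition D0 (v : Obj L) : family :=
  fun E => exists z, zz_ok z /\ zz_src z v /\ E = zz_dom z /\ nonempty E.

Definition is_ring (R : family) : Prop :=
  R emptyset /\
  (forall E F, R E -> R F -> R (union E F)) /\
  (forall E F, R E -> R F -> R (diff E F)).

Definition ring_gen (D : family) : family :=
  fun E => forall R, is_ring R -> (forall F, D F -> R F) -> R E.

Definition Av (v : Obj L) : family := ring_gen (D0 v).

Definition fam_sub (P Q : family) : Prop := forall E, P E -> Q E.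
Definition fam_eq (P Q : family) : Prop := forall E, P E <-> Q E.

Definition is_filter (A U : family) : Prop :=
  (exists E, U E) /\
  (forall E, U E -> A E /\ nonempty E) /\
  (forall E F, U E -> U F -> U (inter E F)) /\
  (forall E F, U E -> A F -> subset E F -> U F).

Definition is_ultrafilter (A U : family) : Prop :=
  is_filter A U /\ (forall U', is_filter A U' -> fam_sub U U' -> fam_sub U' U).

Definition gen_filter (A B : family) : family :=
  fun E => A E /\ exists F, B F /\ subset F E.

Definition is_ultrafilter_base (A B : family) : Prop :=
  (exists E, B E) /\
  (forall E, B E -> A E /\ nonempty E) /\
  (forall E F, B E -> B F -> exists G, B G /\ subset G (inter E F)) /\
  is_ultrafilter A (gen_filter A B).

Definition is_D0_filter (v : Obj L) (C : family) : Prop :=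
  (exists E, C E) /\
  (forall E, C E -> D0 v E) /\
  (forall E F, C E -> C F -> C (inter E F)) /\
  (forall E F, C E -> D0 v F -> subset E F -> C F).

Definition covers (C : family) (l : list mset) : Prop :=
  exists E, C E /\ subset E (bigunion l).

Definition vLstar (v : Obj L) (C : family) : Prop :=
  is_D0_filter v C /\
  (forall l : list mset, (forall F, In F l -> D0 v F) ->
     (forall F, In F l -> ~ C F) -> ~ covers C l).

Definition U0 (v : Obj L) (C : family) : family :=
  fun S => exists E l, C E /\ (forall F, In F l -> D0 v F) /\ ~ covers C l /\
                     S = diff E (bigunion l).

Definition UC (v : Obj L) (C : family) : family := gen_filter (Av v) (U0 v C).

Definition restrD0 (v : Obj L) (U : family) : family := fun E => U E /\ D0 v E.

End Defs.

(* Main.v *)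
Require Import Defs.
From Stdlib Require Import List Classical FunctionalExtensionality PropExtensionality.
Import ListNotations.

Section Z.
Variable L : LCSC.
Local Notation M := (Mor L).

Lemma set_ext (E F : mset L) : (forall x, E x <-> F x) -> E = F.
Proof. intro H. apply functional_extensionality; intro x; apply propositional_extensionality; auto. Qed.

Fixpoint zinv (z : zigzag L) : zigzag L :=
  match z with [] => [] | (a, b) :: q => zinv q ++ [(b, a)] end.

Lemma zinv_snoc r a b : zinv (r ++ [(a, b)]) = (b, a) :: zinv r.
Proof. induction r as [|[c d] r IH]; simpl; auto. rewrite IH. reflexivity. Qed.

Lemma zz_rel_app (p q : zigzag L) x y :
  zz_rel (p ++ q) x y <-> exists m, zz_rel q x m /\ zz_rel p m y.
Proof.
  revert y; induction p as [|[a b] p IH]; intro y; simpl.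
  - split; [intro H; exists y; auto | intros [m [H1 H2]]; subst; auto].
  - split.
    + intros [z1 [z2 [H1 [H2 H3]]]]. apply IH in H1. destruct H1 as [m [Hm1 Hm2]].
      exists m; split; auto. exists z1, z2; auto.
    + intros [m [Hm [z1 [z2 [H1 [H2 H3]]]]]]. exists z1, z2; split; auto.
      apply IH. exists m; auto.
Qed.

Lemma zz_rel_inv (z : zigzag L) x y : zz_rel (zinv z) x y <-> zz_rel z y x.
Proof.
  revert x y; induction z as [|[a b] z IH]; intros x y; simpl.
  - split; auto.
  - rewrite zz_rel_app. unfold tau_rel, sigma_rel. simpl. split.
    + intros [m [[z1 [z2 [H1 [[H2 H2'] [H3 H3']]]]] Hm]]. subst.
      apply IH in Hm. exists m, (comp L b m). repeat split; auto.
    + intros [z1 [z2 [H1 [[H2 H2'] [H3 H3']]]]]. subst.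
      exists z1. split.
      * exists x, (comp L b z1). repeat split; auto.
      * apply IH; auto.
Qed.

Lemma zz_rel_inj (z : zigzag L) x x' m : zz_rel z x m -> zz_rel z x' m -> x = x'.
Proof.
  revert x x' m; induction z as [|[a b] z IH]; intros x x' m; simpl.
  - intros; subst; auto.
  - unfold tau_rel, sigma_rel.
    intros [z1 [z2 [H1 [[H2 H2'] [H3 H3']]]]] [z1' [z2' [H1' [[H4 H4'] [H5 H5']]]]].
    subst. assert (z1 = z1'). { apply (left_cancel L b); auto. congruence. }
    subst. eapply IH; eauto.
Qed.

Lemma zz_ok_cons2 e f (x : M * M) r :
  zz_ok ((e, f) :: x :: r) <-> rng L e = rng L f /\ src L (fst x) = src L f /\ zz_ok (x :: r).
Proof. destruct x; simpl; tauto. Qed.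

Lemma zz_ok_app p c d a b q : zz_ok (p ++ [(c, d)]) -> zz_ok ((a, b) :: q) ->
  src L a = src L d -> zz_ok (p ++ (c, d) :: (a, b) :: q).
Proof.
  induction p as [|[e f] p IH]; intros H1 H2 H3.
  - simpl in *. auto.
  - destruct p as [|[g h] p].
    + simpl in *. destruct H1 as [H1 [H1' H1'']]. auto.
    + simpl app in *. rewrite zz_ok_cons2 in H1 |- *. simpl in *.
      destruct H1 as [Ha [Hb Hc]]. repeat split; auto. apply IH; auto.
Qed.

Lemma zz_ok_inv z : zz_ok z -> zz_ok (zinv z).
Proof.
  induction z as [|[a b] q IH]; intro H; [simpl in H; contradiction|].
  destruct q as [|[a' b'] q''].
  - simpl in *. auto.
  - rewrite zz_ok_cons2 in H. simpl in H. destruct H as [H1 [H2 H3]].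
    specialize (IH H3). change (zz_ok (zinv ((a', b') :: q'') ++ [(b, a)])).
    change (zinv ((a', b') :: q'')) with (zinv q'' ++ [(b', a')]) in *.
    rewrite <- app_assoc. simpl. apply zz_ok_app; auto. simpl. congruence.
Qed.

Lemma zz_src_dec (z : zigzag L) v : zz_src z v -> exists r a b, z = r ++ [(a, b)] /\ src L b = v.
Proof.
  intros [a [b [H1 [H2 H3]]]]. exists (removelast z), a, b. split; auto.
  rewrite <- H1. apply app_removelast_last; auto.
Qed.

Lemma D0_inter v (E F : mset L) : D0 v E -> D0 v F -> nonempty (inter E F) -> D0 v (inter E F).
Proof.
  intros [z [Hz1 [Hz2 [HE _]]]] [z' [Hz1' [Hz2' [HF _]]]] Hne. subst.
  destruct (zz_src_dec _ _ Hz2) as [r [c [d [Hr Hd]]]].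
  destruct (zz_src_dec _ _ Hz2') as [r' [c' [d' [Hr' Hd']]]].
  exists (z ++ zinv z' ++ z'). split; [|split; [|split; auto]].
  - destruct z' as [|[a1 b1] q'] eqn:Ez'; [simpl in Hz1'; contradiction|].
    assert (Hm : zz_ok (zinv z' ++ z')).
    { subst z'. simpl zinv. rewrite <- app_assoc. simpl. apply zz_ok_app; auto.
      apply zz_ok_inv in Hz1'. exact Hz1'. }
    rewrite <- Ez' in *. rewrite Hr. rewrite Hr' at 1. rewrite zinv_snoc.
    rewrite <- app_assoc. simpl. apply zz_ok_app.
    + rewrite <- Hr. auto.
    + rewrite Hr' in Hm at 1. rewrite zinv_snoc in Hm. simpl in Hm. exact Hm.
    + congruence.
  - exists c', d'. rewrite app_assoc, Hr', app_assoc. split; [apply last_last|].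
    split; auto. intro H. apply app_eq_nil in H. destruct H. discriminate.
  - apply set_ext. intro x. unfold zz_dom, inter. split.
    + intros [[y Hy] [k Hk]]. exists y. apply zz_rel_app. exists x. split; auto.
      apply zz_rel_app. exists k. split; auto. apply zz_rel_inv; auto.
    + intros [y Hy]. apply zz_rel_app in Hy. destruct Hy as [m [Hm Hy]].
      apply zz_rel_app in Hm. destruct Hm as [k [Hk Hm]]. apply (proj1 (zz_rel_inv _ _ _)) in Hm.
      pose proof (zz_rel_inj _ _ _ _ Hm Hk). subst. split; eauto.
Qed.
End Z.
Section Main.
Variable L : LCSC.
Variable v : Obj L.
Local Notation M := (Mor L).
Local Notation A := (Av v).
Local Notation D := (D0 v).

Lemma A_ind (P : family L) : is_ring P -> (forall F, D F -> P F) -> forall S, A S -> P S.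
Proof. intros HR HD S HS. apply HS; auto. Qed.

Lemma A_empty : A (emptyset L).
Proof. intros R [H _] _. auto. Qed.
Lemma A_union E F : A E -> A F -> A (union E F).
Proof. intros HE HF R HR HD. pose proof HR as [_ [Hu _]]. apply Hu; [apply HE|apply HF]; auto. Qed.
Lemma A_diff E F : A E -> A F -> A (diff E F).
Proof. intros HE HF R HR HD. pose proof HR as [_ [_ Hd]]. apply Hd; [apply HE|apply HF]; auto. Qed.
Lemma A_D E : D E -> A E.
Proof. intros HE R HR HD. auto. Qed.
Lemma A_inter E F : A E -> A F -> A (inter E F).
Proof.
  intros HE HF. replace (inter E F) with (diff E (diff E F)).
  - apply A_diff; auto. apply A_diff; auto.
  - apply set_ext. intro x. unfold diff, inter. split.
    + intros [H1 H2]. split; auto. apply NNPP. intro H. apply H2; auto.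
    + intros [H1 H2]. split; auto. intros [_ H]; auto.
Qed.
Lemma A_bigunion l : (forall F, In F l -> A F) -> A (bigunion l).
Proof.
  induction l as [|F l IH]; intro H.
  - replace (bigunion (L:=L) []) with (emptyset L). apply A_empty.
    apply set_ext. intro x. unfold bigunion, emptyset. split; [tauto|]. intros [F [[] _]].
  - replace (bigunion (F :: l)) with (union F (bigunion l)).
    + apply A_union. apply H; simpl; auto. apply IH. intros; apply H; simpl; auto.
    + apply set_ext. intro x. unfold bigunion, union. simpl. split.
      * intros [H1|[G [H1 H2]]]; eauto.
      * intros [G [[H1|H1] H2]]; subst; eauto.
Qed.

Lemma D_ne E : D E -> nonempty E.
Proof. intros [z [_ [_ [_ H]]]]; auto. Qed.

Definition disj (E F : mset L) := forall x, E x -> F x -> False.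

Section C.
Variable C : family L.
Hypothesis HC : vLstar v C.

Lemma C_D E : C E -> D E.
Proof. destruct HC as [[_ [H _]] _]; auto. Qed.
Lemma C_inter E F : C E -> C F -> C (inter E F).
Proof. destruct HC as [[_ [_ [H _]]] _]; auto. Qed.
Lemma C_ex : exists E, C E.
Proof. destruct HC as [[H _] _]; auto. Qed.

Lemma notcover l : (forall F, In F l -> D F) -> ~ covers C l -> forall F, In F l -> ~ C F.
Proof. intros Hl Hn F HF HCF. apply Hn. exists F. split; auto. intros x Hx. exists F; auto. Qed.

Lemma U0_ne S : U0 v C S -> nonempty S.
Proof.
  intros [E [l [HE [Hl [Hn HS]]]]]. subst. apply NNPP. intro H. apply Hn.
  exists E. split; auto. intros x Hx. apply NNPP. intro H'. apply H. exists x. split; auto.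
Qed.
Lemma U0_A S : U0 v C S -> A S.
Proof.
  intros [E [l [HE [Hl [Hn HS]]]]]. subst. apply A_diff. apply A_D, C_D; auto.
  apply A_bigunion. intros; apply A_D; auto.
Qed.
Lemma U0_inter S S' : U0 v C S -> U0 v C S' -> exists G, U0 v C G /\ subset G (inter S S').
Proof.
  intros [E [l [HE [Hl [Hn HS]]]]] [E' [l' [HE' [Hl' [Hn' HS']]]]]. subst.
  exists (diff (inter E E') (bigunion (l ++ l'))). split.
  - exists (inter E E'), (l ++ l'). split; [apply C_inter; auto|]. split.
    + intros F HF. apply in_app_or in HF. destruct HF; auto.
    + split; auto. destruct HC as [_ HC2]. apply HC2.
      * intros F HF. apply in_app_or in HF. destruct HF; auto.
      * intros F HF. apply in_app_or in HF. destruct HF; [apply (notcover l)|apply (notcover l')]; auto.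
  - intros x [[H1 H2] H3]. split; split; auto; intros [F [HF HFx]]; apply H3; exists F; split; auto;
      apply in_or_app; auto.
Qed.
Lemma U0_E E : C E -> U0 v C (diff E (bigunion [])).
Proof.
  intros HE. exists E, []. split; auto. split; [intros _ []|]. split; [|reflexivity].
  intros [G [HG HGs]].
  destruct (D_ne G (C_D G HG)) as [x Hx]. destruct (HGs x Hx) as [F [[] _]].
Qed.

Lemma dich S : A S -> exists B, U0 v C B /\ (subset B S \/ disj B S).
Proof.
  apply A_ind with (P := fun S => exists B, U0 v C B /\ (subset B S \/ disj B S)).
  - split; [|split].
    + destruct C_ex as [E HE]. exists (diff E (bigunion [])). split; [apply U0_E; auto|].
      right. intros x _ [].
    + intros E F [B1 [HB1 H1]] [B2 [HB2 H2]].
      destruct H1 as [H1|H1]; [exists B1; split; auto; left; intros x Hx; left; auto|].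
      destruct H2 as [H2|H2]; [exists B2; split; auto; left; intros x Hx; right; auto|].
      destruct (U0_inter _ _ HB1 HB2) as [G [HG HGs]]. exists G. split; auto. right.
      intros x Hx [Hx'|Hx']; destruct (HGs x Hx); eauto.
    + intros E F [B1 [HB1 H1]] [B2 [HB2 H2]].
      destruct H1 as [H1|H1]; [|exists B1; split; auto; right; intros x Hx [Hx' _]; eauto].
      destruct (U0_inter _ _ HB1 HB2) as [G [HG HGs]]. exists G. split; auto.
      destruct H2 as [H2|H2].
      * right. intros x Hx [_ Hx']. apply Hx'. apply H2. apply (HGs x Hx).
      * left. intros x Hx. destruct (HGs x Hx). split; eauto.
  - intros F HF. destruct (classic (C F)) as [H|H].
    + exists (diff F (bigunion [])). split; [apply U0_E; auto|]. left. intros x [Hx _]; auto.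
    + destruct C_ex as [E HE]. exists (diff E (bigunion [F])). split.
      * exists E, [F]. repeat split; auto.
        -- intros G [HG|[]]; subst; auto.
        -- destruct HC as [_ HC2]. apply HC2. intros G [HG|[]]; subst; auto.
           intros G [HG|[]]; subst; auto.
      * right. intros x [_ Hx] Hx'. apply Hx. exists F. simpl; auto.
Qed.

Lemma UC_filter : is_filter A (UC v C).
Proof.
  split; [|split; [|split]].
  - destruct C_ex as [E HE]. exists (diff E (bigunion [])). split.
    + apply U0_A, U0_E; auto.
    + exists (diff E (bigunion [])). split; [apply U0_E; auto|intros x; auto].
  - intros E [HE [B [HB HBs]]]. split; auto. destruct (U0_ne B HB) as [x Hx]. exists x; auto.
  - intros E F [HE [B [HB HBs]]] [HF [B' [HB' HBs']]]. split; [apply A_inter; auto|].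
    destruct (U0_inter _ _ HB HB') as [G [HG HGs]]. exists G. split; auto.
    intros x Hx. destruct (HGs x Hx). split; auto.
  - intros E F [HE [B [HB HBs]]] HF Hs. split; auto. exists B. split; auto.
    intros x Hx; auto.
Qed.

Lemma UC_ultra : is_ultrafilter A (UC v C).
Proof.
  split; [apply UC_filter|]. intros U' HU' Hsub S HS.
  destruct HU' as [_ [HU'1 [HU'2 _]]].
  destruct (HU'1 S HS) as [HA _].
  destruct (dich S HA) as [B [HB [H|H]]].
  - split; auto. exists B; auto.
  - assert (HBU : U' B). { apply Hsub. split; [apply U0_A; auto|]. exists B; split; auto. intros x; auto. }
    destruct (HU'1 _ (HU'2 _ _ HS HBU)) as [_ [x [Hx1 Hx2]]]. exfalso; eauto.
Qed.

Lemma part1 : is_ultrafilter_base A (U0 v C).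
Proof.
  split; [|split; [|split]].
  - destruct C_ex as [E HE]. exists (diff E (bigunion [])). apply U0_E; auto.
  - intros E HE. split; [apply U0_A|apply U0_ne]; auto.
  - apply U0_inter.
  - apply UC_ultra.
Qed.

Lemma part2 : fam_eq (restrD0 v (UC v C)) C.
Proof.
  intro E. split.
  - intros [[HA [B [HB HBs]]] HD]. destruct HB as [E' [l [HE' [Hl [Hn HS]]]]]. subst.
    apply NNPP. intro HnE. destruct HC as [_ HC2]. apply (HC2 (E :: l)).
    + intros F [HF|HF]; subst; auto.
    + intros F [HF|HF]; subst; auto. apply (notcover l); auto.
    + exists E'. split; auto. intros x Hx. destruct (classic (bigunion l x)) as [[F [HF HFx]]|Hn'].
      * exists F; split; simpl; auto.
      * exists E; split; simpl; auto. apply HBs. split; auto.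
  - intros HE. split; [|apply C_D; auto]. split; [apply A_D, C_D; auto|].
    exists (diff E (bigunion [])). split; [apply U0_E; auto|]. intros x [Hx _]; auto.
Qed.
End C.

Section U.
Variable U : family L.
Hypothesis HU : is_ultrafilter A U.

Lemma U_A E : U E -> A E.
Proof. destruct HU as [[_ [H _]] _]. intros; apply H; auto. Qed.
Lemma U_ne E : U E -> nonempty E.
Proof. destruct HU as [[_ [H _]] _]. intros; apply H; auto. Qed.
Lemma U_inter E F : U E -> U F -> U (inter E F).
Proof. destruct HU as [[_ [_ [H _]]] _]. auto. Qed.
Lemma U_up E F : U E -> A F -> subset E F -> U F.
Proof. destruct HU as [[_ [_ [_ H]]] _]. eauto. Qed.

Lemma U_dich S : A S -> U S \/ exists Y, U Y /\ disj Y S.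
Proof.
  intros HS. destruct (classic (exists Y, U Y /\ disj Y S)) as [H|H]; auto. left.
  set (U' := fun X => A X /\ exists Y, U Y /\ subset (inter Y S) X).
  assert (HF : is_filter A U').
  { split; [|split; [|split]].
    - destruct HU as [[[E HE] _] _]. exists S. split; auto. exists E. split; auto. intros x [_ Hx]; auto.
    - intros E [HE [Y [HY HYs]]]. split; auto. apply NNPP. intro Hn. apply H. exists Y. split; auto.
      intros x Hx Hx'. apply Hn. exists x. apply HYs. split; auto.
    - intros E F [HE [Y [HY HYs]]] [HF [Y' [HY' HYs']]]. split; [apply A_inter; auto|].
      exists (inter Y Y'). split; [apply U_inter; auto|]. intros x [[H1 H2] H3]. split; [apply HYs|apply HYs']; split; auto.
    - intros E F [HE [Y [HY HYs]]] HF Hs. split; auto. exists Y. split; auto. intros x Hx; auto. }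
  destruct HU as [_ Hmax]. apply (Hmax U' HF).
  - intros E HE. split; [apply U_A; auto|]. exists E. split; auto. intros x [Hx _]; auto.
  - split; auto. destruct HU as [[[E HE] _] _]. exists E. split; auto. intros x [_ Hx]; auto.
Qed.

Lemma U_prime l : (forall F, In F l -> A F) -> U (bigunion l) -> exists F, In F l /\ U F.
Proof.
  induction l as [|F l IH]; intros Hl HU'.
  - destruct (U_ne _ HU') as [x [F [[] _]]].
  - destruct (U_dich F (Hl F (or_introl eq_refl))) as [H|[Y [HY HYd]]].
    + exists F; simpl; auto.
    + destruct IH as [G [HG HGU]].
      * intros; apply Hl; simpl; auto.
      * apply (U_up (inter (bigunion (F :: l)) Y)). apply U_inter; auto.
        apply A_bigunion. intros; apply Hl; simpl; auto.
        intros x [[G [[HG|HG] HGx]] HYx]; subst. exfalso; eauto. exists G; auto.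
      * exists G; simpl; auto.
Qed.

Lemma A_covered S : A S -> exists l, (forall F, In F l -> D F) /\ subset S (bigunion l).
Proof.
  apply A_ind with (P := fun S => exists l, (forall F, In F l -> D F) /\ subset S (bigunion l)).
  - split; [|split].
    + exists []. split; [intros _ []|intros x []].
    + intros E F [l [Hl Hs]] [l' [Hl' Hs']]. exists (l ++ l'). split.
      * intros G HG. apply in_app_or in HG; destruct HG; auto.
      * intros x [Hx|Hx]; [destruct (Hs x Hx) as [G [HG HGx]]|destruct (Hs' x Hx) as [G [HG HGx]]];
          exists G; split; auto; apply in_or_app; auto.
    + intros E F [l [Hl Hs]] _. exists l. split; auto. intros x [Hx _]; auto.
  - intros F HF. exists [F]. split. intros G [HG|[]]; subst; auto. intros x Hx. exists F; simpl; auto.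
Qed.

Definition CU := restrD0 v U.

Lemma CU_ex : exists E, CU E.
Proof.
  destruct HU as [[[S HS] _] _]. destruct (A_covered S (U_A S HS)) as [l [Hl Hs]].
  destruct (U_prime l) as [F [HF HFU]].
  - intros; apply A_D; auto.
  - apply (U_up S); auto. apply A_bigunion; intros; apply A_D; auto.
  - exists F. split; auto.
Qed.

Lemma CU_star : vLstar v CU.
Proof.
  split; [split; [apply CU_ex|split; [|split]]|].
  - intros E [_ H]; auto.
  - intros E F [HE HDE] [HF HDF]. assert (HI : U (inter E F)) by (apply U_inter; auto).
    split; auto. apply D0_inter; auto. apply U_ne; auto.
  - intros E F [HE HDE] HDF Hs. split; auto. apply (U_up E); auto. apply A_D; auto.
  - intros l Hl Hn [E [[HE HDE] Hs]].
    destruct (U_prime l) as [F [HF HFU]].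
    + intros; apply A_D; auto.
    + apply (U_up E); auto. apply A_bigunion; intros; apply A_D; auto.
    + apply (Hn F HF). split; auto.
Qed.

Lemma U0_in_U B : U0 v CU B -> U B.
Proof.
  intros [E [l [[HE HDE] [Hl [Hn HS]]]]]. subst.
  assert (Hnot : forall F, In F l -> ~ U F).
  { intros F HF HFU. apply (notcover CU l Hl Hn F HF). split; auto. }
  clear Hn. induction l as [|F l IH].
  - apply (U_up E); auto. apply A_diff. apply A_D; auto. apply A_bigunion; intros _ [].
    intros x Hx. split; auto. intros [F [[] _]].
  - assert (IH' : U (diff E (bigunion l))).
    { apply IH; intros; [apply Hl|apply Hnot]; simpl; auto. }
    destruct (U_dich F (A_D F (Hl F (or_introl eq_refl)))) as [H|[Y [HY HYd]]].
    + exfalso. apply (Hnot F); simpl; auto.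
    + apply (U_up (inter (diff E (bigunion l)) Y)); [apply U_inter; auto| |].
      * apply A_diff. apply A_D; auto. apply A_bigunion; intros; apply A_D, Hl; auto.
      * intros x [[HEx Hlx] HYx]. split; auto. intros [G [[HG|HG] HGx]]; subst; eauto.
        apply Hlx. exists G; auto.
Qed.

Lemma part3 : fam_eq (UC v CU) U.
Proof.
  intro X. split.
  - intros [HX [B [HB HBs]]]. apply (U_up B); auto. apply U0_in_U; auto.
  - intros HX. split; [apply U_A; auto|].
    destruct (dich CU CU_star X (U_A X HX)) as [B [HB [H|H]]].
    + exists B; auto.
    + exfalso. destruct (U_ne _ (U_inter _ _ HX (U0_in_U B HB))) as [x [H1 H2]]. eauto.
Qed.
End U.

End Main.

Theorem mainTheorem4 (L : LCSC) (v : Obj L) :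
  (forall C, vLstar v C -> is_ultrafilter_base (Av v) (U0 v C)) /\
  (forall C, vLstar v C -> fam_eq (restrD0 v (UC v C)) C) /\
  (forall U, is_ultrafilter (Av v) U ->
      vLstar v (restrD0 v U) /\ fam_eq (UC v (restrD0 v U)) U).
Proof.
  split; [|split].
  - intros C HC. apply part1; auto.
  - intros C HC. apply part2; auto.
  - intros U HU. split; [apply CU_star; auto|apply part3; auto].
Qed.
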